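(* Let $n\ge1$ be an integer and, for $j=0,\dots,n$, let $f_{2j}$ be a homogeneous polynomial of degree $2j$ with complex coefficients in the four entries of a $2\times2$ matrix, not divisible by $\det$ (viewed as a degree-$2$ polynomial). Let $S_{2n}\subset\mathbb{K}P^3$ be the surface defined by $F_{2n}(A)=0$, where $$F_{2n}(A)=\sum_{j=0}^n t^{-j(j+1)}(\det A)^{n-j}f_{2j}(A).$$ Let $C_{2j}=\{[B]_{\mathbb{C}^*}\in Q(\mathbb{C}): f_{2j}(B)=0\}$. For $j=1,\dots,n$ let $\sigma_j$ be the section of $\mathcal{S}$ over $Q(\mathbb{C})\setminus(C_{2j-2}\cup C_{2j})$ given by $\sigma_j([B]_{\mathbb{C}^*})=\left[\sqrt{-\tfrac{f_{2j-2}(B)}{f_{2j}(B)}}\,B\right]_{\mathbb{R}^*}$. Then $$\operatorname{VAL}(S_{2n})\subset\Sigma_\infty\cup\Sigma_R\cup\Sigma_C,$$ where $\Sigma_\infty=\{\infty\}\times C_{2n}$, $\Sigma_R=\bigcup_{j=1}^{n-1}((j,j+1)\cap\mathbb{Q})\times\mathcal{S}|_{C_{2j}}\ \cup\ ((n,\infty)\cap\mathbb{Q})\times\mathcal{S}|_{C_{2n}}$, and $\Sigma_C=\bigcup_{j=1}^n\{j\}\times\Big(\sigma_j\big(Q(\mathbb{C})\setminus(C_{2j-2}\cup C_{2j})\big)\cup\mathcal{S}|_{C_{2j-2}\cap C_{2j}}\Big)$.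
   Context: Matrices and classes. For a $2\times 2$ matrix $B=\begin{pmatrix}a&b\\ c&d\end{pmatrix}$ write $B^{\mathbf c}=\begin{pmatrix}d&-b\\ -c&a\end{pmatrix}$; $B^*$ is the conjugate transpose. $\mathbb{C}P^3$ is the projectivization of the space of complex $2\times2$ matrices; $[B]_{\mathbb{C}^*}$ is the class of a nonzero matrix up to nonzero complex scalars, $[B]_{\mathbb{R}^*}$ its class up to nonzero real scalars. $Q(\mathbb{C})=\{[B]_{\mathbb{C}^*}:\det B=0\}$, $PSU(2)=\{[U]_{\mathbb{C}^*}:U\in SU(2)\}$. Circle bundle. $\mathcal{S}$ is the set of classes $[B]_{\mathbb{R}^*}$ of complex $2\times2$ matrices of rank one, with projection $\pi\colon\mathcal{S}\to Q(\mathbb{C})$, $[B]_{\mathbb{R}^*}\mapsto[B]_{\mathbb{C}^*}$; for $Z\subset Q(\mathbb{C})$, $\mathcal{S}|_Z=\pi^{-1}(Z)$; a section over $Z$ is a map $\sigma\colon Z\to\mathcal{S}$ with $\pi\circ\sigma=\mathrm{id}_Z$ (the formula for $\sigma_j$ is independent of the representative $B$ and the choice of square root, since classes are taken up to real scalars). Cone notation (subsets of $\mathbb{C}P^3$). For $I\subset(0,\infty)$ and $T\subset\mathcal{S}$, $I\times T:=\{[e^\alpha B+e^{-\alpha}(B^{\mathbf c})^*]_{\mathbb{C}^*}:\alpha\in I,\ [B]_{\mathbb{R}^*}\in T\}$; for $Y\subset Q(\mathbb{C})$, $\{\infty\}\times Y:=Y$. Field and valuation. $\mathbb{K}$ is the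 field of Puiseux series in $t$ (with $t\to\infty$) with complex coefficients, i.e. series $\sum_q a_q t^q$ with $a_q\in\mathbb{C}$ and exponents in $\frac1N\mathbb{Z}$ for some $N\ge1$, bounded above. $\mathbb{K}P^3$ is the projectivization of the space of $2\times 2$ matrices over $\mathbb{K}$. Every nonzero matrix $A$ over $\mathbb{K}$ can be written uniquely as $A=t^\alpha B+(\text{terms with exponents}<\alpha)$ with $\alpha\in\mathbb{Q}$ and $B$ a nonzero complex matrix. The map $\operatorname{VAL}\colon\mathbb{K}P^3\to\mathbb{C}P^3$ is: if $\det A=0$, $\operatorname{VAL}([A])=[B]_{\mathbb{C}^*}$; if $\det A\ne0$, rescale $A$ so that $\det A=1$ (then $\alpha\ge0$), and set $\operatorname{VAL}([A])=[e^\alpha B+e^{-\alpha}(B^{\mathbf c})^*]_{\mathbb{C}^*}$. *)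

(* Defs.v *)
From HB Require Import structures.
From mathcomp Require Import all_boot all_order all_algebra.
From mathcomp Require Import boolp classical_sets fsbigop.
From mathcomp Require Import reals Rstruct.
From mathcomp Require Import complex.
From mathcomp Require Import mpoly.
Set Implicit Arguments. Unset Strict Implicit. Unset Printing Implicit Defensive.
Import Order.TTheory GRing.Theory Num.Theory.
Local Open Scope ring_scope.

Definition CC := complex Rdefinitions.R.

Definition eC (a : rat) : CC := ((Rtrigo_def.exp (ratr a))%:C)%C.
Definition rC (r : Rdefinitions.R) : CC := (r%:C)%C.

Definition ents (T : Type) (M : 'M[T]_2) : 'I_4 -> T :=
  fun i => match val i with
           | 0 => M 0 0 | 1 => M 0 1 | 2 => M 1 0 | _ => M 1 1 end.

Definition evM (p : {mpoly CC[4]}) (M : 'M[CC]_2) : CC := p.@[ents M].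

Definition detP : {mpoly CC[4]} :=
  'X_(inord 0) * 'X_(inord 3) - 'X_(inord 1) * 'X_(inord 2).

Definition homog_deg (p : {mpoly CC[4]}) (d : nat) : Prop :=
  p \is ishomog1 d mdeg.

Definition mxc (B : 'M[CC]_2) : 'M[CC]_2 :=
  \matrix_(i < 2, j < 2)
    (if (i == 0) && (j == 0) then B 1 1
     else if (i == 0) && (j == 1) then - B 0 1
     else if (i == 1) && (j == 0) then - B 1 0
     else B 0 0).
Definition mxstar (B : 'M[CC]_2) : 'M[CC]_2 := \matrix_(i < 2, j < 2) conjc (B j i).

Definition coneM (a : rat) (B : 'M[CC]_2) : 'M[CC]_2 :=
  eC a *: B + eC (- a) *: mxstar (mxc B).

(* A series is given by its coefficient function q |-> a_q (coefficient of t^q). *)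
Definition ser := rat -> CC.

Definition is_puiseux (a : ser) : Prop :=
  exists N : nat, (0 < N)%N /\ exists M : rat,
    forall q : rat, a q != 0 -> (exists z : int, q * N%:R = z%:~R) /\ q <= M.

Definition kzero : ser := fun _ => 0.
Definition kconst (c : CC) : ser := fun q => if q == 0 then c else 0.
Definition tpow (e : rat) : ser := fun q => if q == e then 1 else 0.
Definition kadd (a b : ser) : ser := fun q => a q + b q.
Definition kopp (a : ser) : ser := fun q => - a q.
(* Cauchy product; for Puiseux series the support of the sum is finite *)
Definition kmul (a b : ser) : ser := fun q =>
  \sum_(x \in [set x : rat | a x != 0 /\ b (q - x) != 0]) a x * b (q - x).
Definition kpow (a : ser) (k : nat) : ser := iter k (kmul a) (kconst 1).

Definition kdet (A : 'M[ser]_2) : ser :=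
  kadd (kmul (A 0 0) (A 1 1)) (kopp (kmul (A 0 1) (A 1 0))).
Definition kscale (l : ser) (A : 'M[ser]_2) : 'M[ser]_2 :=
  \matrix_(i < 2, j < 2) kmul l (A i j).
Definition kmx_puiseux (A : 'M[ser]_2) : Prop := forall i j, is_puiseux (A i j).
Definition kmx_nonzero (A : 'M[ser]_2) : Prop := exists i j, A i j <> kzero.

Definition kmonom (x : 'I_4 -> ser) (m : 'X_{1..4}) : ser :=
  foldr (fun i acc => kmul (kpow (x i) (m i)) acc) (kconst 1) (enum 'I_4).
Definition keval (p : {mpoly CC[4]}) (x : 'I_4 -> ser) : ser :=
  foldr kadd kzero [seq kmul (kconst p@_m) (kmonom x m) | m <- msupp p].

(* F_{2n}(A) = sum_{j=0}^n t^{-j(j+1)} (det A)^{n-j} f_{2j}(A) ; f j stands for f_{2j} *)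
Definition Fsurf (n : nat) (f : nat -> {mpoly CC[4]}) (A : 'M[ser]_2) : ser :=
  foldr kadd kzero
    [seq kmul (tpow (- ((j * j.+1)%N)%:R))
              (kmul (kpow (kdet A) (n - j)) (keval (f j) (ents A)))
    | j <- iota 0 n.+1].

Definition lead (A : 'M[ser]_2) (a : rat) (B : 'M[CC]_2) : Prop :=
  B != 0 /\ (forall i j, B i j = A i j a) /\
  (forall q, a < q -> forall i j, A i j q = 0).

(* VAL([A]) is the class of the complex matrix M (relational form) *)
Definition VALrel (A : 'M[ser]_2) (M : 'M[CC]_2) : Prop :=
  (kdet A = kzero /\ exists a B, lead A a B /\ M = B) \/
  (kdet A <> kzero /\ exists (l : ser) a B,
      is_puiseux l /\ kdet (kscale l A) = kconst 1 /\
      lead (kscale l A) a B /\ M = coneM a B).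

(* ---------- the sets in CP^3 (predicates on representatives) ---------- *)
Definition inQ (B : 'M[CC]_2) : Prop := B != 0 /\ \det B = 0.
(* [B]_C lies in C_{2j} (equivalently [B]_R lies in S|_{C_{2j}}) *)
Definition inCj (f : nat -> {mpoly CC[4]}) (j : nat) (B : 'M[CC]_2) : Prop :=
  inQ B /\ evM (f j) B = 0.
(* [M]_C lies in I x T, for the single exponent a *)
Definition inCone (a : rat) (T : 'M[CC]_2 -> Prop) (M : 'M[CC]_2) : Prop :=
  exists B, T B /\ exists l : CC, l != 0 /\ M = l *: coneM a B.
Definition sigma_img (f : nat -> {mpoly CC[4]}) (j : nat) (B' : 'M[CC]_2) : Prop :=
  exists B, inQ B /\ evM (f j.-1) B != 0 /\ evM (f j) B != 0 /\
    exists w : CC, w ^+ 2 = - (evM (f j.-1) B / evM (f j) B) /\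
    exists r : Rdefinitions.R, r != 0 /\ B' = rC r *: (w *: B).

Definition Sigma_inf n f (M : 'M[CC]_2) : Prop := inCj f n M.
Definition Sigma_R n f (M : 'M[CC]_2) : Prop :=
  (exists j : nat, (1 <= j <= n.-1)%N /\ exists a : rat,
      j%:R < a < j.+1%:R /\ inCone a (inCj f j) M) \/
  (exists a : rat, n%:R < a /\ inCone a (inCj f n) M).
Definition Sigma_C n f (M : 'M[CC]_2) : Prop :=
  exists j : nat, (1 <= j <= n)%N /\
    inCone j%:R (fun B => sigma_img f j B \/ (inCj f j.-1 B /\ inCj f j B)) M.

(* Main.v *)
Require Import Defs.
From HB Require Import structures.
From mathcomp Require Import all_boot all_order all_algebra.
From mathcomp Require Import boolp classical_sets fsbigop cardinality.
From mathcomp Require Import reals Rstruct.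
From mathcomp Require Import complex.
From mathcomp Require Import mpoly.
From mathcomp Require Import zify ring lra.
Import Order.TTheory GRing.Theory Num.Theory.
Local Open Scope classical_set_scope.
Local Open Scope ring_scope.
Lemma det22 (R : comNzRingType) (B : 'M[R]_2) : \det B = B 0 0 * B 1 1 - B 0 1 * B 1 0.
Proof.
rewrite (expand_det_row _ 0) big_ord_recl big_ord1 /cofactor !det_mx11 !mxE /=.
rewrite !expr0 !mul1r expr1 mulN1r mulrN.
by congr (_ * B _ _ - B _ _ * B _ _); apply/val_inj.
Qed.

Definition bnd (s : ser) (v : rat) := forall q, v < q -> s q = 0.

Lemma kmulT (a b : ser) q : kmul a b q = \sum_(x \in [set: rat]) a x * b (q - x).
Proof.
rewrite /kmul; apply: fsbig_widen => // x [_ /=] /not_andP [] /negP;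
  rewrite negbK => /eqP ->; rewrite ?mul0r ?mulr0 //.
Qed.

Lemma kmul_bnd a b u w v : bnd a u -> bnd b w -> v = u + w ->
  bnd (kmul a b) v /\ kmul a b v = a u * b w.
Proof.
move=> ha hb ->; split.
  move=> q hq; rewrite kmulT; apply: fsbig1 => x _.
  case: (lerP x u) => xu; last by rewrite ha ?mul0r.
  by rewrite hb ?mulr0 //; lra.
rewrite kmulT -(fsbig_widen [set u] [set: rat]) ?fsbig_set1 //.
  by rewrite [u + w]addrC addrK.
move=> x [_ /= xu]; case: (ltgtP x u) => xu'.
- by rewrite hb ?mulr0 //; lra.
- by rewrite ha ?mul0r.
- by rewrite xu' in xu.
Qed.

Lemma kconst_mul c b q : kmul (kconst c) b q = c * b q.
Proof.
rewrite kmulT -(fsbig_widen [set 0] [set: rat]) ?fsbig_set1 ?subr0 //.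
by move=> x [_ /= x0]; rewrite /kconst ifN ?mul0r //; apply/eqP.
Qed.

Lemma kmul0 a q : kmul kzero a q = 0.
Proof. by rewrite kmulT; apply: fsbig1 => x _; rewrite /kzero mul0r. Qed.

Lemma kmulr0 a q : kmul a kzero q = 0.
Proof. by rewrite kmulT; apply: fsbig1 => x _; rewrite /kzero mulr0. Qed.

Lemma kconst_bnd c : bnd (kconst c) 0.
Proof. by move=> q hq; rewrite /kconst (gt_eqF hq). Qed.

Lemma tpow_bnd e : bnd (tpow e) e.
Proof. by move=> q hq; rewrite /tpow (gt_eqF hq). Qed.

Lemma kpow_bnd x u k : bnd x u ->
  bnd (kpow x k) (k%:R * u) /\ kpow x k (k%:R * u) = x u ^+ k.
Proof.
move=> hx; elim: k => [|k [IH1 IH2]].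
  by rewrite mul0r expr0; split; [exact: kconst_bnd | rewrite /kpow /= /kconst eqxx].
have e : k.+1%:R * u = u + k%:R * u by rewrite -addn1 natrD mulrDl mul1r addrC.
have [h1 h2] := kmul_bnd _ _ _ _ _ hx IH1 e.
split; first exact: h1.
by rewrite /kpow iterS -/(kpow x k) h2 IH2 exprS.
Qed.

Lemma foldr_kadd_map (T : Type) (s : seq T) (G : T -> ser) q :
  foldr kadd kzero (map G s) q = \sum_(x <- s) G x q.
Proof.
elim: s => [|y s IH] /=; first by rewrite big_nil.
by rewrite big_cons /kadd IH.
Qed.

Lemma kmonom_gen (x : 'I_4 -> ser) al (b : 'I_4 -> CC)
  (hx : forall i, bnd (x i) al) (hb : forall i, x i al = b i) (m : 'X_{1..4})
  (s : seq 'I_4) :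
  bnd (foldr (fun i acc => kmul (kpow (x i) (m i)) acc) (kconst 1) s)
      ((\sum_(i <- s) m i)%N%:R * al) /\
  (foldr (fun i acc => kmul (kpow (x i) (m i)) acc) (kconst 1) s)
      ((\sum_(i <- s) m i)%N%:R * al) = \prod_(i <- s) b i ^+ m i.
Proof.
elim: s => [|i s [IH1 IH2]] /=.
  rewrite !big_nil mul0r; split; first exact: kconst_bnd.
  by rewrite /kconst eqxx.
have [k1 k2] := kpow_bnd _ _ (m i) (hx i).
have e : (\sum_(j <- i :: s) m j)%N%:R * al =
   (m i)%:R * al + (\sum_(j <- s) m j)%N%:R * al by rewrite big_cons natrD mulrDl.
have [h1 h2] := kmul_bnd _ _ _ _ _ k1 IH1 e.
by split => //; rewrite h2 k2 IH2 hb big_cons.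
Qed.

Lemma kmonom_bnd (x : 'I_4 -> ser) al (b : 'I_4 -> CC)
  (hx : forall i, bnd (x i) al) (hb : forall i, x i al = b i) (m : 'X_{1..4}) :
  bnd (kmonom x m) ((mdeg m)%:R * al) /\
  kmonom x m ((mdeg m)%:R * al) = \prod_i b i ^+ m i.
Proof.
have [h1 h2] := kmonom_gen _ _ _ hx hb m (enum 'I_4).
rewrite big_enum /= in h1 h2; rewrite big_enum /= in h2.
by rewrite /kmonom mdegE.
Qed.

Lemma keval_bnd (p : {mpoly CC[4]}) d (x : 'I_4 -> ser) al (b : 'I_4 -> CC) :
  homog_deg p d -> (forall i, bnd (x i) al) -> (forall i, x i al = b i) ->
  bnd (keval p x) (d%:R * al) /\ keval p x (d%:R * al) = p.@[b].
Proof.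
move=> /dhomogP hp hx hb; split.
  move=> q hq; rewrite /keval foldr_kadd_map big1_seq // => m /= hm.
  have [h1 _] := kmonom_bnd _ _ _ hx hb m.
  by rewrite kconst_mul h1 ?mulr0 // (hp m hm).
rewrite /keval foldr_kadd_map mevalE; apply: eq_big_seq => m hm.
have [_ h2] := kmonom_bnd _ _ _ hx hb m.
by rewrite kconst_mul -(hp m hm) h2.
Qed.

Lemma ents_bnd (A : 'M[ser]_2) al : (forall i j, bnd (A i j) al) ->
  forall i, bnd (ents A i) al.
Proof. by move=> h i; rewrite /ents; case: (val i) => [|[|[|?]]]; exact: h. Qed.

Lemma ents_top (A : 'M[ser]_2) al (B : 'M[CC]_2) :
  (forall i j, B i j = A i j al) -> forall i, ents A i al = ents B i.
Proof. by move=> h i; rewrite /ents; case: (val i) => [|[|[|?]]]; rewrite h. Qed.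

Lemma evM_scale p d c B : homog_deg p d -> evM p (c *: B) = c ^+ d * evM p B.
Proof.
move=> /dhomogP hp; rewrite /evM !mevalE mulr_sumr; apply: eq_big_seq => m hm.
have es i : ents (c *: B) i = c * ents B i.
  by rewrite /ents; case: (val i) => [|[|[|?]]]; rewrite mxE.
rewrite (eq_bigr (fun i => c ^+ m i * ents B i ^+ m i)); last first.
  by move=> i _; rewrite es exprMn.
by rewrite big_split /= prodrXr -mdegE (hp m hm) mulrCA.
Qed.

Definition PzP (N : nat) (M : rat) (P : rat -> Prop) :=
  forall q, P q -> (exists z : int, q * N%:R = z%:~R) /\ q <= M.
Definition supp (s : ser) : rat -> Prop := fun q => s q != 0.

Lemma PzP_lift N M P N' M' : PzP N M P -> (N %| N')%N -> M <= M' -> PzP N' M' P.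
Proof.
move=> h /dvdnP [k ->] hM q /h [[z hz] hq]; split; last by lra.
exists (z * k%:Z); rewrite natrM mulrCA hz intrM mulrC; congr (_ * _).
Qed.
Arguments PzP_lift [N M P N' M'].

Lemma PzP_sub N M (P Q : rat -> Prop) : (forall q, P q -> Q q) -> PzP N M Q -> PzP N M P.
Proof. by move=> hPQ h q /hPQ /h. Qed.
Arguments PzP_sub [N M P Q].

Lemma common2 a b : is_puiseux a -> is_puiseux b ->
  exists N M, [/\ (0 < N)%N, 0 <= M, PzP N M (supp a) & PzP N M (supp b)].
Proof.
move=> [N1 [N10 [M1 h1]]] [N2 [N20 [M2 h2]]].
exists (N1 * N2)%N, (Num.max (Num.max M1 M2) 0); split.
- by rewrite muln_gt0 N10 N20.
- by rewrite le_max lexx orbT.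
- apply: (PzP_lift h1); first exact: dvdn_mulr.
  by rewrite le_max; apply/orP; left; rewrite le_max lexx.
- apply: (PzP_lift h2); first exact: dvdn_mull.
  by rewrite le_max; apply/orP; left; rewrite le_max lexx orbT.
Qed.
Arguments common2 [a b].

Lemma common3 a b c : is_puiseux a -> is_puiseux b -> is_puiseux c ->
  exists N M, [/\ (0 < N)%N, 0 <= M, PzP N M (supp a), PzP N M (supp b)
                & PzP N M (supp c)].
Proof.
move=> [N1 [N10 [M1 h1]]] [N2 [N20 [M2 h2]]] [N3 [N30 [M3 h3]]].
have hM1 : M1 <= Num.max (Num.max M1 M2) (Num.max M3 0).
  by rewrite !le_max lexx.
have hM2 : M2 <= Num.max (Num.max M1 M2) (Num.max M3 0).
  by rewrite !le_max lexx !orbT.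
have hM3 : M3 <= Num.max (Num.max M1 M2) (Num.max M3 0).
  by rewrite !le_max lexx !orbT.
exists (N1 * N2 * N3)%N, (Num.max (Num.max M1 M2) (Num.max M3 0)); split.
- by rewrite !muln_gt0 N10 N20 N30.
- by rewrite !le_max lexx !orbT.
- by apply: (PzP_lift h1) => //; apply/dvdn_mulr/dvdn_mulr.
- by apply: (PzP_lift h2) => //; apply/dvdn_mulr/dvdn_mull.
- by apply: (PzP_lift h3) => //; apply/dvdn_mull.
Qed.
Arguments common3 [a b c].

Lemma PzP_puiseux N M s : (0 < N)%N -> PzP N M (supp s) -> is_puiseux s.
Proof. by move=> N0 h; exists N; split => //; exists M. Qed.
Arguments PzP_puiseux [N M s].

Lemma kmul_supp a b q : kmul a b q != 0 -> exists x, a x != 0 /\ b (q - x) != 0.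
Proof.
move=> h; apply: contra_notP (negP h) => hne; apply/eqP.
rewrite kmulT; apply: fsbig1 => x _.
case: (eqVneq (a x) 0) => [->|ha]; first by rewrite mul0r.
case: (eqVneq (b (q - x)) 0) => [->|hb]; first by rewrite mulr0.
by exfalso; apply: hne; exists x.
Qed.

Lemma PzP_kmul N M1 M2 a b : PzP N M1 (supp a) -> PzP N M2 (supp b) ->
  PzP N (M1 + M2) (supp (kmul a b)).
Proof.
move=> ha hb q /kmul_supp [x [hx1 hx2]].
have [[z1 hz1] hq1] := ha x hx1.
have [[z2 hz2] hq2] := hb (q - x) hx2.
split; last by lra.
exists (z1 + z2); rewrite intrD -hz1 -hz2; ring.
Qed.
Arguments PzP_kmul [N M1 M2 a b].

Lemma PzP_kadd N M a b : PzP N M (supp a) -> PzP N M (supp b) ->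
  PzP N M (supp (kadd a b)).
Proof.
move=> ha hb q; rewrite /supp /kadd => hq.
case: (eqVneq (a q) 0) => [h|h]; last exact: ha.
by apply: hb; rewrite /supp; move: hq; rewrite h add0r.
Qed.
Arguments PzP_kadd [N M a b].

Lemma PzP_kopp N M a : PzP N M (supp a) -> PzP N M (supp (kopp a)).
Proof. by move=> ha q; rewrite /supp /kopp oppr_eq0; exact: ha. Qed.
Arguments PzP_kopp [N M a].

Lemma kmul_puis a b : is_puiseux a -> is_puiseux b -> is_puiseux (kmul a b).
Proof.
move=> ha hb; have [N [M [N0 _ h1 h2]]] := common2 ha hb.
exact: (PzP_puiseux N0 (PzP_kmul h1 h2)).
Qed.

Lemma kadd_puis a b : is_puiseux a -> is_puiseux b -> is_puiseux (kadd a b).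
Proof.
move=> ha hb; have [N [M [N0 _ h1 h2]]] := common2 ha hb.
exact: (PzP_puiseux N0 (PzP_kadd h1 h2)).
Qed.

Lemma kopp_puis a : is_puiseux a -> is_puiseux (kopp a).
Proof. by move=> [N [N0 [M h]]]; apply: (PzP_puiseux N0 (PzP_kopp h)). Qed.

Definition win (N : nat) (lo hi : rat) : set rat :=
  [set x : rat | (exists z : int, x * N%:R = z%:~R) /\ lo <= x /\ x <= hi].

Lemma win_fin N lo hi : (0 < N)%N -> finite_set (win N lo hi).
Proof.
move=> N0; have Nr : (0:rat) < N%:R by rewrite ltr0n.
set B := Num.bound (`|lo * N%:R| + `|hi * N%:R|).
have hB : `|lo * N%:R| + `|hi * N%:R| < (B%:Z)%:~R.
  exact: (archi_boundP (addr_ge0 (normr_ge0 _) (normr_ge0 _))).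
apply: (sub_finite_set _ (finite_image
  (fun m : nat => ((m%:Z - B%:Z)%:~R / N%:R : rat)) (finite_II (B + B).+1))).
move=> x [[z hz] [hlo hhi]].
have hl : lo * N%:R <= z%:~R by rewrite -hz ler_pM2r.
have hh : z%:~R <= hi * N%:R by rewrite -hz ler_pM2r.
have n1 := ler_norm (- (lo * N%:R)); rewrite normrN in n1.
have n2 := ler_norm (hi * N%:R).
have n3 := normr_ge0 (lo * N%:R); have n4 := normr_ge0 (hi * N%:R).
have z1 : - (B%:Z) < z.
  rewrite -(ltr_int rat) rmorphN /=; lra.
have z2 : z < B%:Z.
  rewrite -(ltr_int rat); lra.
exists (absz (z + B%:Z)).
  rewrite /= ; lia.
have -> : ((absz (z + B%:Z))%:Z = z + B%:Z) by lia.
by rewrite addrK -hz mulfK // gt_eqF.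
Qed.

Lemma top_exists N M (P : rat -> Prop) : (0 < N)%N -> PzP N M P ->
  (exists q, P q) -> exists v, P v /\ forall q, P q -> q <= v.
Proof.
move=> N0 hP [q0 Pq0]; have Nr : (0:rat) < N%:R by rewrite ltr0n.
have gap q q' : P q -> P q' -> q < q' -> q * N%:R + 1 <= q' * N%:R.
  move=> /hP [[z hz] _] /hP [[z' hz'] _] qq'.
  have : z < z' by rewrite -(ltr_int rat) -hz -hz' ltr_pM2r.
  move=> zz; have : z + 1 <= z' by lia.
  by rewrite -(ler_int rat) intrD -hz -hz'.
suff key : forall m : nat, forall q, P q -> (M - q) * N%:R <= m%:R ->
    exists v, P v /\ forall q, P q -> q <= v.
  have h0 : 0 <= `|(M - q0) * N%:R| := normr_ge0 _.
  apply: (key _ q0 Pq0); apply: (le_trans (ler_norm _)).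
  exact/ltW/(archi_boundP h0).
elim=> [|m IH] q Pq hm;
  (case: (pselect (forall q', P q' -> q' <= q)) => [H|H]; first by exists q);
  move/existsNP: H => [q' /not_implyP [Pq' /negP]]; rewrite -ltNge => qq';
  have g := gap _ _ Pq Pq' qq'; have [_ hq'] := hP _ Pq'.
  have : (q' - q) * N%:R <= (M - q) * N%:R by rewrite ler_pM2r //; lra.
  by move: hm; rewrite mulrBl => hm; rewrite mulrBl; lra.
apply: (IH q' Pq'); move: hm g; rewrite -natr1 !mulrBl; lra.
Qed.

Lemma sumT_win (W : set rat) (F : rat -> CC) :
  (forall x, F x != 0 -> W x) ->
  \sum_(x \in [set: rat]) F x = \sum_(x \in W) F x.
Proof.
move=> hW; apply/esym/fsbig_widen => // x [_ /= nW].
by case: (eqVneq (F x) 0) => // /hW.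
Qed.

Lemma exchT (W : set rat) (F : rat -> rat -> CC) : finite_set W ->
  (forall x y, F x y != 0 -> W x /\ W y) ->
  \sum_(x \in [set: rat]) \sum_(y \in [set: rat]) F x y =
  \sum_(y \in [set: rat]) \sum_(x \in [set: rat]) F x y.
Proof.
move=> Wf hW.
rewrite (eq_fsbigr (fun x => \sum_(y \in W) F x y)); last first.
  by move=> x _; apply: sumT_win => y /hW [].
rewrite [in RHS](eq_fsbigr (fun y => \sum_(x \in W) F x y)); last first.
  by move=> y _; apply: sumT_win => x /hW [].
rewrite (sumT_win W); last first.
  move=> x; case: (pselect (W x)) => // nW; rewrite fsbig1 ?eqxx // => y _.
  by case: (eqVneq (F x y) 0) => // /hW [].
rewrite [in RHS](sumT_win W); last first.
  move=> y; case: (pselect (W y)) => // nW; rewrite fsbig1 ?eqxx // => x _.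
  by case: (eqVneq (F x y) 0) => // /hW [].
exact: exchange_fsbig.
Qed.

Lemma mul3_neq0 (x y z : CC) : x * y * z != 0 -> [/\ x != 0, y != 0 & z != 0].
Proof. by rewrite !mulf_eq0 !negb_or => /andP [/andP [-> ->] ->]. Qed.

Lemma kmul_comm a b : kmul a b = kmul b a.
Proof.
apply/funext => q; rewrite !kmulT (reindex_fsbigT (fun x => q - x)); last first.
  by exists (fun x => q - x) => x; rewrite subKr.
by apply: eq_fsbigr => x _; rewrite subKr mulrC.
Qed.

Lemma kmul_assoc a b c : is_puiseux a -> is_puiseux b -> is_puiseux c ->
  kmul (kmul a b) c = kmul a (kmul b c).
Proof.
move=> ha hb hc; have [N [M [N0 M0 h1 h2 h3]]] := common3 ha hb hc.
apply/funext => q.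
have hW : forall x y, a x * b (y - x) * c (q - y) != 0 ->
    win N (q - 2 * M) (2 * M) x /\ win N (q - 2 * M) (2 * M) y.
  move=> x y /mul3_neq0 [n1 n2 n3].
  have [[z1 hz1] hx] := h1 x n1.
  have [[z2 hz2] hyx] := h2 (y - x) n2.
  have [_ hqy] := h3 (q - y) n3.
  split; split.
  - by exists z1.
  - by split; lra.
  - by exists (z1 + z2); rewrite intrD -hz1 -hz2; ring.
  - by split; lra.
transitivity (\sum_(x \in [set: rat]) \sum_(y \in [set: rat])
                a x * b (y - x) * c (q - y)).
  rewrite kmulT (eq_fsbigr (fun y => \sum_(x \in [set: rat])
                a x * b (y - x) * c (q - y))); last first.
    by move=> y _; rewrite kmulT mulr_fsuml.
  by rewrite (exchT _ _ (win_fin N _ _ N0) hW).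
rewrite [in RHS]kmulT; apply: eq_fsbigr => x _.
rewrite kmulT mulr_fsumr [in RHS](reindex_fsbigT (fun y => y - x)); last first.
  by exists (fun y => y + x) => y; rewrite ?addrK ?subrK.
apply: eq_fsbigr => y _; rewrite mulrA; congr (_ * c _); ring.
Qed.
Arguments kmul_assoc [a b c].

Lemma kmul_addr a b c : is_puiseux a -> is_puiseux b -> is_puiseux c ->
  kmul a (kadd b c) = kadd (kmul a b) (kmul a c).
Proof.
move=> ha hb hc; have [N [M [N0 M0 h1 h2 h3]]] := common3 ha hb hc.
apply/funext => q; rewrite /kadd !kmulT.
have key (g : ser) : PzP N M (supp g) -> forall x,
    a x * g (q - x) != 0 -> win N (q - M) M x.
  move=> hg x; rewrite mulf_eq0 negb_or => /andP [n1 n2].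
  have [[z1 hz1] hx] := h1 x n1; have [_ hqx] := hg (q - x) n2.
  by split; [exists z1 | split; lra].
rewrite (sumT_win (win N (q - M) M)); last first.
  move=> x; rewrite mulrDr => hx.
  case: (eqVneq (a x * b (q - x)) 0) => [e|e]; last exact: (key b h2).
  by apply: (key c h3); move: hx; rewrite e add0r.
rewrite (sumT_win _ _ (key b h2)) (sumT_win _ _ (key c h3)).
rewrite -fsbig_split; last exact: win_fin.
by apply: eq_fsbigr => x _; rewrite mulrDr.
Qed.

Lemma kmul_oppr a b : kmul a (kopp b) = kopp (kmul a b).
Proof.
apply/funext => q; rewrite /kopp !kmulT -mulN1r mulr_fsumr.
by apply: eq_fsbigr => x _; rewrite mulN1r mulrN.
Qed.

Lemma kmul_swap l x y : is_puiseux l -> is_puiseux x -> is_puiseux y ->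
  kmul (kmul l x) (kmul l y) = kmul (kmul l l) (kmul x y).
Proof.
move=> hl hx hy.
rewrite kmul_assoc //; last exact: kmul_puis.
rewrite -(kmul_assoc hx hl hy) [kmul x l]kmul_comm (kmul_assoc hl hx hy).
by rewrite -kmul_assoc //; exact: kmul_puis.
Qed.

Lemma kdet_scale l A : is_puiseux l -> kmx_puiseux A ->
  kdet (kscale l A) = kmul (kmul l l) (kdet A).
Proof.
move=> hl hA; rewrite /kdet /kscale !mxE.
rewrite kmul_addr; first last.
- by apply: kopp_puis; apply: kmul_puis.
- by apply: kmul_puis.
- by apply: kmul_puis.
by rewrite kmul_oppr !kmul_swap.
Qed.

Arguments keval_bnd [p d x al b].
Arguments ents_bnd [A al].
Arguments ents_top [A al B].
Arguments evM_scale [p d] c B.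

Definition Tj n (f : nat -> {mpoly CC[4]}) (A : 'M[ser]_2) (j : nat) : ser :=
  kmul (tpow (- ((j * j.+1)%N)%:R))
       (kmul (kpow (kdet A) (n - j)) (keval (f j) (ents A))).

Lemma Fsurf_pt n f A q : Fsurf n f A q = \sum_(j <- iota 0 n.+1) Tj n f A j q.
Proof. exact: (foldr_kadd_map _ (iota 0 n.+1) (Tj n f A) q). Qed.

Lemma kdet_bnd (A : 'M[ser]_2) al (B : 'M[CC]_2) :
  (forall i j, bnd (A i j) al) -> (forall i j, B i j = A i j al) ->
  bnd (kdet A) (al + al) /\ kdet A (al + al) = \det B.
Proof.
move=> hA hB.
have [a1 a2] := kmul_bnd _ _ _ _ (al + al) (hA 0 0) (hA 1 1) erefl.
have [b1 b2] := kmul_bnd _ _ _ _ (al + al) (hA 0 1) (hA 1 0) erefl.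
split.
  by move=> q hq; rewrite /kdet /kadd /kopp a1 // b1 // oppr0 addr0.
by rewrite det22 /kdet /kadd /kopp a2 b2 !hB.
Qed.

Lemma Tj_top n f (A : 'M[ser]_2) j al (BA : 'M[CC]_2) de d :
  homog_deg (f j) (2 * j) -> (forall i j, bnd (A i j) al) ->
  (forall i j, BA i j = A i j al) -> bnd (kdet A) de -> kdet A de = d ->
  bnd (Tj n f A j) (- ((j * j.+1)%N)%:R + ((n - j)%:R * de + (2 * j)%:R * al)) /\
  Tj n f A j (- ((j * j.+1)%N)%:R + ((n - j)%:R * de + (2 * j)%:R * al))
    = d ^+ (n - j) * evM (f j) BA.
Proof.
move=> hf hA hB hd hd2.
have [p1 p2] := kpow_bnd _ _ (n - j) hd.
have [k1 k2] := keval_bnd hf (ents_bnd hA) (ents_top hB).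
have [m1 m2] := kmul_bnd _ _ _ _ _ p1 k1 erefl.
have [t1 t2] := kmul_bnd _ _ _ _ _ (tpow_bnd (- ((j * j.+1)%N)%:R)) m1 erefl.
split; first exact: t1.
by rewrite /Tj t2 m2 p2 k2 hd2 /tpow eqxx mul1r.
Qed.

Lemma sum1 n j0 (H : nat -> CC) : (j0 <= n)%N ->
  (forall j, (j <= n)%N -> j != j0 -> H j = 0) ->
  \sum_(j <- iota 0 n.+1) H j = H j0.
Proof.
move=> hj0 hH; rewrite (bigD1_seq j0) ?iota_uniq ?mem_iota //.
rewrite big1_seq; first by rewrite /= addr0.
move=> j /andP [hj]; rewrite mem_iota /= => hin.
by apply: hH.
Qed.

Lemma sum2 n k (H : nat -> CC) : (1 <= k <= n)%N ->
  (forall j, (j <= n)%N -> j != k.-1 -> j != k -> H j = 0) ->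
  \sum_(j <- iota 0 n.+1) H j = H k.-1 + H k.
Proof.
move=> /andP [k1 kn] hH.
rewrite (bigD1_seq k) ?iota_uniq ?mem_iota //.
rewrite -big_filter (bigD1_seq k.-1) ?filter_uniq ?iota_uniq //; last first.
  by rewrite mem_filter mem_iota; apply/andP; split; lia.
rewrite big1_seq; first by rewrite /= addr0 addrC.
move=> j /andP [hj1]; rewrite mem_filter mem_iota => /andP [hj2 hin].
by apply: hH => //; lia.
Qed.

Definition gq (a : rat) (j : nat) : rat := 2 * j%:R * a - j%:R * (j%:R + 1).

Lemma gq_diff a i j :
  gq a i - gq a j = (i%:R - j%:R) * (2 * a - i%:R - j%:R - 1).
Proof. rewrite /gq; ring. Qed.

Lemma gq_lt1 a i j : (j < i)%N -> i%:R + j%:R + 1 < 2 * a -> gq a j < gq a i.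
Proof.
move=> hji h; rewrite -subr_gt0 gq_diff.
have : (j%:R : rat) < i%:R by rewrite ltr_nat.
move=> hh; apply: mulr_gt0; lra.
Qed.

Lemma gq_lt2 a i j : (i < j)%N -> 2 * a < i%:R + j%:R + 1 -> gq a j < gq a i.
Proof.
move=> hji h; rewrite -subr_gt0 gq_diff.
have : (i%:R : rat) < j%:R by rewrite ltr_nat.
move=> hh; rewrite -mulrNN; apply: mulr_gt0; lra.
Qed.

Lemma ltn_rat (i j : nat) : (i < j)%N -> (i%:R + 1 <= j%:R :> rat).
Proof. by move=> h; rewrite natr1 ler_nat. Qed.

Lemma const_poly_ev (p : {mpoly CC[4]}) : homog_deg p 0 ->
  ~ (exists g : {mpoly CC[4]}, p = g * detP) -> forall X, evM p X != 0.
Proof.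
move=> /dhomogP hp hnd X.
have hpc : p = (p@_0%MM)%:MP.
  apply/mpolyP => m; rewrite mcoeffC.
  case: (eqVneq m 0%MM) => [->|hm]; first by rewrite mulr1.
  rewrite mulr0; apply/eqP; rewrite -[_ == 0]negbK -mcoeff_msupp; apply/negP => hin.
  by move: (hp m hin) => /eqP; rewrite mdeg_eq0 (negbTE hm).
rewrite hpc /evM mevalC; apply/negP => /eqP h0; apply: hnd; exists 0.
by rewrite mul0r hpc h0 mpolyC0.
Qed.
Arguments top_exists [N M P].

Lemma ord2 (i : 'I_2) : i = 0 \/ i = 1.
Proof.
case: i => [[|[|m]] hi]; [left|right|by []]; exact: val_inj.
Qed.

Lemma ser_nz (s : ser) : s <> kzero -> exists q, s q != 0.
Proof.
move=> h; apply: contra_notP h => h; apply/funext => q.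
by case: (eqVneq (s q) 0) => // hq; exfalso; apply: h; exists q.
Qed.

Lemma ser_top (s : ser) : is_puiseux s -> s <> kzero ->
  exists v, s v != 0 /\ bnd s v.
Proof.
move=> [N [N0 [M h]]] /ser_nz hne.
have [v [Pv hv]] := top_exists N0 h hne.
exists v; split => // q hq.
case: (eqVneq (s q) 0) => // hsq.
by have := hv q hsq; rewrite leNgt hq.
Qed.

Lemma mx_lead (A : 'M[ser]_2) : kmx_puiseux A -> kmx_nonzero A ->
  exists al (B : 'M[CC]_2), B != 0 /\ (forall i j, B i j = A i j al) /\
    (forall i j, bnd (A i j) al).
Proof.
move=> hA [i0 [j0 /ser_nz [q0 hq0]]].
have [N1 [M1 [N10 _ p00 p01]]] := common2 (hA 0 0) (hA 0 1).
have [N2 [M2 [N20 _ p10 p11]]] := common2 (hA 1 0) (hA 1 1).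
have m1 : M1 <= Num.max M1 M2 by rewrite le_max lexx.
have m2 : M2 <= Num.max M1 M2 by rewrite le_max lexx orbT.
have d1 : (N1 %| N1 * N2)%N by exact: dvdn_mulr.
have d2 : (N2 %| N1 * N2)%N by exact: dvdn_mull.
set P := fun q => exists i j, A i j q != 0.
have hP : PzP (N1 * N2) (Num.max M1 M2) P.
  move=> q [i [j hq]].
  case: (ord2 i) => ?; case: (ord2 j) => ?; subst i j.
  - exact: (PzP_lift p00 d1 m1).
  - exact: (PzP_lift p01 d1 m1).
  - exact: (PzP_lift p10 d2 m2).
  - exact: (PzP_lift p11 d2 m2).
have N0 : (0 < N1 * N2)%N by rewrite muln_gt0 N10 N20.
have [v [[i1 [j1 Pv]] hv]] := top_exists N0 hP (ex_intro _ q0 (ex_intro _ i0 (ex_intro _ j0 hq0))).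
exists v, (\matrix_(i, j) A i j v); split.
  apply/negP => /eqP h; move: Pv; have := congr1 (fun M : 'M[CC]_2 => M i1 j1) h.
  by rewrite !mxE => ->; rewrite eqxx.
split; first by move=> i j; rewrite mxE.
move=> i j q hq; case: (eqVneq (A i j q) 0) => // hne.
by have := hv q (ex_intro _ i (ex_intro _ j hne)); rewrite leNgt hq.
Qed.

Lemma uniq_max a n j0 :
  (forall j, (j < j0)%N -> j0%:R + j%:R + 1 < 2 * a) ->
  (forall j, (j0 < j)%N -> (j <= n)%N -> 2 * a < j0%:R + j%:R + 1) ->
  forall j, (j <= n)%N -> j != j0 -> gq a j < gq a j0.
Proof.
move=> h1 h2 j jn; rewrite neq_ltn => /orP [hj|hj].
  by apply: gq_lt1 => //; apply: h1.
by apply: gq_lt2 => //; apply: h2.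
Qed.

Lemma natQ (i j c : nat) : (i + c <= j)%N -> i%:R + c%:R <= j%:R :> rat.
Proof. by rewrite -natrD ler_nat. Qed.

Lemma cases_a (n : nat) (a : rat) : (1 <= n)%N -> 0 <= a ->
  (exists j0, (j0 <= n)%N /\
     (forall j, (j <= n)%N -> j != j0 -> gq a j < gq a j0) /\
     ((j0 = 0%N) \/ ((1 <= j0 <= n.-1)%N /\ j0%:R < a < j0.+1%:R) \/
      (j0 = n /\ n%:R < a)))
  \/
  (exists k, (1 <= k <= n)%N /\ a = k%:R /\
     (forall j, (j <= n)%N -> j != k.-1 -> j != k -> gq a j < gq a k) /\
     gq a k.-1 = gq a k).
Proof.
move=> n1 a0.
set k := absz (Num.floor a).
have hfl : (Posz k) = Num.floor a by rewrite /k gez0_abs // floor_ge0.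
have [hk1 hk2] : k%:R <= a /\ a < k%:R + 1.
  by have := floor_itv a; rewrite -hfl intrD => /andP [h1 h2]; split.
have n0 : (0%:R : rat) = 0 by [].
case: (eqVneq a k%:R) => [ak|ak].
  case: (posnP k) => [k0|kp].
    left; exists 0%N; split => //; split; last by left.
    apply: uniq_max => // j hj _.
    have := natQ 0 j 1 ltac:(by rewrite addn1); rewrite ak k0 n0; lra.
  case: (leqP k n) => [kn|nk].
    right; exists k; split; first by rewrite kp kn.
    split => //; split.
      move=> j jn hj1 hj2; move: hj2; rewrite neq_ltn => /orP [hj|hj].
        apply: gq_lt1 => //; have : (j + 2 <= k)%N by lia.
        by move/natQ; rewrite ak; lra.
      apply: gq_lt2 => //; have : (k + 1 <= j)%N by lia.
      by move/natQ; rewrite ak; lra.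
    have e1 : (k.-1)%:R + 1 = k%:R :> rat by rewrite natr1 prednK.
    rewrite /gq ak.
    have -> : (k.-1)%:R = k%:R - 1 :> rat by lra.
    ring.
  left; exists n; split => //; split; last by right; right; split => //;
    have := natQ n k 1 ltac:(by rewrite addn1); lra.
  apply: uniq_max => [j hj|j hj1 hj2]; last by lia.
  have := natQ j n 1 ltac:(by rewrite addn1); have := natQ n k 1 ltac:(by rewrite addn1); lra.
have hk3 : k%:R < a by rewrite lt_neqAle eq_sym ak hk1.
case: (posnP k) => [k0|kp].
  left; exists 0%N; split => //; split; last by left.
  apply: uniq_max => // j hj _.
  have := natQ 0 j 1 ltac:(by rewrite addn1); rewrite k0 n0 in hk2 *; lra.
case: (ltnP k n) => [kn|nk].
  left; exists k; split; first exact: ltnW.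
  split; last by right; left; split; [lia | rewrite -natr1; lra].
  apply: uniq_max => [j hj|j hj1 hj2].
    have := natQ j k 1 ltac:(by rewrite addn1); lra.
  have := natQ k j 1 ltac:(by rewrite addn1); lra.
left; exists n; split => //; split; last by right; right; split => //;
  have := natQ n k 0 ltac:(by rewrite addn0); rewrite n0; lra.
apply: uniq_max => [j hj|j hj1 hj2]; last by lia.
have := natQ j n 1 ltac:(by rewrite addn1); have := natQ n k 0 ltac:(by rewrite addn0); rewrite n0; lra.
Qed.

Arguments kdet_bnd [A al B].
Arguments Tj_top n f [A] j [al BA de d].
Arguments kdet_scale [l A].
Arguments ser_top [s].
Arguments mx_lead [A].
Arguments const_poly_ev [p].

Lemma Tj_zero n f (A : 'M[ser]_2) j q : kdet A = kzero -> (j < n)%N ->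
  Tj n f A j q = 0.
Proof.
move=> hd hj; rewrite /Tj hd.
have -> : kpow kzero (n - j) = kzero.
  have -> : (n - j = (n - j).-1.+1)%N by lia.
  by apply/funext => x; rewrite /kpow iterS kmul0.
have -> : kmul kzero (keval (f j) (ents A)) = kzero by apply/funext => x; rewrite kmul0.
by rewrite kmulr0.
Qed.

Lemma mx_nz (B : 'M[CC]_2) : B != 0 -> exists i j, B i j != 0.
Proof.
move=> hB; apply: contra_notP (negP hB) => h; apply/eqP/matrixP => i j.
rewrite mxE; case: (eqVneq (B i j) 0) => // hij.
by exfalso; apply: h; exists i, j.
Qed.

Lemma kdet_puis (A : 'M[ser]_2) : kmx_puiseux A -> is_puiseux (kdet A).
Proof.
move=> hA; apply: kadd_puis; first exact: kmul_puis.
by apply: kopp_puis; exact: kmul_puis.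
Qed.

Theorem theorem5p1 (n : nat) (f : nat -> {mpoly CC[4]}) :
  (1 <= n)%N ->
  (forall j, (j <= n)%N -> homog_deg (f j) (2 * j)) ->
  (forall j, (j <= n)%N -> ~ (exists g : {mpoly CC[4]}, f j = g * detP)) ->
  forall A : 'M[ser]_2,
    kmx_puiseux A -> kmx_nonzero A -> Fsurf n f A = kzero ->
    forall M : 'M[CC]_2, VALrel A M ->
      Sigma_inf n f M \/ Sigma_R n f M \/ Sigma_C n f M.
Proof.
move=> n1 hhom hnd A hA hAnz hF M hV.
case: hV => [[hdet [a [B [[Bn0 [hB hbnd]] ->]]]] |
             [hdet [l [a [B [hl [hdet1 [[Bn0 [hB hbnd]] ->]]]]]]]].
  have hAb : forall i j, bnd (A i j) a by move=> i j q hq; exact: hbnd.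
  left; split.
    split => //; have [_ kd] := kdet_bnd hAb hB.
    by rewrite -kd hdet.
  have hd1 : bnd (kdet A) 0 by rewrite hdet.
  have hd2 : kdet A 0 = 0 by rewrite hdet.
  have [_ t2] := Tj_top n f n (hhom n (leqnn n)) hAb hB hd1 hd2.
  have h : Fsurf n f A (- ((n * n.+1)%N)%:R + ((n - n)%:R * 0 + (2 * n)%:R * a)) = 0.
    by rewrite hF.
  rewrite Fsurf_pt (@sum1 n n) // in h; last first.
    by move=> j jn hj; apply: Tj_zero => //; rewrite ltn_neqAle hj jn.
  by rewrite t2 subnn expr0 mul1r in h.
have hAb : forall i j, bnd (kscale l A i j) a by move=> i j q hq; exact: hbnd.
have hLL : kmul (kmul l l) (kdet A) = kconst 1 by rewrite -(kdet_scale hl hA).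
have lnz : l <> kzero.
  move=> l0; have := congr1 (fun s => s 0) hLL.
  have e : kmul kzero kzero = kzero by apply/funext => x; rewrite kmul0.
  by rewrite l0 e /= kmul0 /kconst eqxx => /eqP; rewrite eq_sym oner_eq0.
have [be [cn0 lb]] := ser_top hl lnz.
set c := l be in cn0.
have [de [dn0 db]] := ser_top (kdet_puis _ hA) hdet.
set d := kdet A de in dn0.
have [al [BA [BAn0 [hBA hAal]]]] := mx_lead hA hAnz.
have [ll1 ll2] := kmul_bnd _ _ _ _ (be + be) lb lb erefl.
have [p1 p2] := kmul_bnd _ _ _ _ (be + be + de) ll1 db erefl.
rewrite hLL ll2 in p2.
have hde : de = - (be + be).
  move: p2; rewrite /kconst; case: eqP => [h _|_ /esym/eqP]; first by lra.
  by rewrite !mulf_eq0 (negbTE cn0) (negbTE dn0).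
have hcd : c * c * d = 1.
  have e : be + be + de == 0 by rewrite hde addrN.
  by move: p2; rewrite /kconst e => h; exact: (esym h).
have hS i j : bnd (kscale l A i j) (be + al) /\ kscale l A i j (be + al) = c * BA i j.
  have [s1 s2] := kmul_bnd _ _ _ _ (be + al) lb (hAal i j) erefl.
  by rewrite mxE; split => //; rewrite s2 hBA.
have hal : a = be + al.
  case: (ltgtP a (be + al)) => // hlt.
    have [i [j hij]] := mx_nz _ BAn0.
    have := hbnd _ hlt i j; have [_ ->] := hS i j.
    by move/eqP; rewrite mulf_eq0 (negbTE cn0) (negbTE hij).
  exfalso; move/eqP: Bn0; apply; apply/matrixP => i j.
  by rewrite mxE hB; have [s1 _] := hS i j; apply: s1.
have hBc : B = c *: BA.
  by apply/matrixP => i j; rewrite mxE hB hal; have [_ ->] := hS i j.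
have [kd1 kd2] := kdet_bnd hAb hB.
rewrite hdet1 in kd1 kd2.
have a0 : 0 <= a.
  rewrite leNgt; apply/negP => an.
  by have := kd1 0 ltac:(lra); rewrite /kconst eqxx => /eqP; rewrite oner_eq0.
have detB0 : 0 < a -> \det B = 0.
  by move=> ap; rewrite -kd2 /kconst ifN // gt_eqF //; lra.
have hT j : (j <= n)%N ->
    bnd (Tj n f A j) (- (n%:R * (be + be)) + gq a j) /\
    Tj n f A j (- (n%:R * (be + be)) + gq a j) = d ^+ (n - j) * evM (f j) BA.
  move=> jn; have [t1 t2] := Tj_top n f j (hhom j jn) hAal hBA db erefl.
  have -> : - (n%:R * (be + be)) + gq a j =
      - ((j * j.+1)%N)%:R + ((n - j)%:R * de + (2 * j)%:R * al).
    rewrite hde hal /gq natrB // !natrM -natr1; ring.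
  by split.
have evB j : (j <= n)%N -> evM (f j) B = c ^+ (2 * j) * evM (f j) BA.
  by move=> jn; rewrite hBc (evM_scale c BA (hhom j jn)).
have hFv v : \sum_(j <- iota 0 n.+1) Tj n f A j v = 0.
  by rewrite -Fsurf_pt hF.
have inQB : 0 < a -> inQ B by move=> ap; split => //; apply: detB0.
case: (cases_a _ _ n1 a0) => [[j0 [hj0 [huniq hcase]]] | [k [hk [ak [huniq heq]]]]].
  have := hFv (- (n%:R * (be + be)) + gq a j0).
  rewrite (@sum1 n j0) //; last first.
    move=> j jn hj; have [t1 _] := hT j jn; apply: t1.
    by have := huniq j jn hj; lra.
  have [_ ->] := hT j0 hj0; move/eqP; rewrite mulf_eq0 expf_eq0 (negbTE dn0) andbF /=.
  move=> /eqP e0.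
  have eB : evM (f j0) B = 0 by rewrite evB // e0 mulr0.
  case: hcase => [j00|[[hj1 hja]|[j0n hna]]].
  - by exfalso; subst j0; move/eqP: eB; apply/negP; apply: (const_poly_ev (hhom 0%N hj0) (hnd 0%N hj0)).
  - right; left; left; exists j0; split => //; exists a; split => //.
    exists B; split.
      split => //; apply: inQB; move: hja => /andP [h _].
      have hj1' : (0 + 1 <= j0)%N by case/andP: hj1.
      have := natQ 0 j0 1 hj1'; lra.
    by exists 1; split; [exact: oner_neq0 | rewrite scale1r].
  - subst j0; right; left; right; exists a; split => //.
    exists B; split.
      split => //; apply: inQB; have := natQ 0 n 1 ltac:(by rewrite add0n); lra.
    by exists 1; split; [exact: oner_neq0 | rewrite scale1r].
have kp : (0 < k)%N by case/andP: hk.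
have kn : (k <= n)%N by case/andP: hk.
have k1n : (k.-1 <= n)%N by lia.
have ap : 0 < a by rewrite ak ltr0n.
have := hFv (- (n%:R * (be + be)) + gq a k).
rewrite (@sum2 n k) //; last first.
  move=> j jn hj1 hj2; have [t1 _] := hT j jn; apply: t1.
  by have := huniq j jn hj1 hj2; lra.
have [_ T1] := hT k.-1 k1n; rewrite heq in T1; rewrite T1.
have [_ ->] := hT k kn.
have e : (n - k.-1 = (n - k).+1)%N by lia.
rewrite e exprS => h.
have h' : d ^+ (n - k) * (d * evM (f k.-1) BA + evM (f k) BA) = 0 by rewrite -h; ring.
move/eqP: h'; rewrite mulf_eq0 expf_eq0 (negbTE dn0) andbF /=.
set e1 := evM (f k.-1) BA; set e2 := evM (f k) BA.
rewrite addr_eq0 => /eqP he2.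
have he2' : e2 = - (d * e1) by rewrite he2 opprK.
have hsum0 : evM (f k.-1) B + evM (f k) B = 0.
  rewrite !evB //; rewrite -/e1 -/e2.
  have -> : (2 * k = (2 * k.-1).+2)%N by lia.
  rewrite !exprS he2'.
  transitivity (c ^+ (2 * k.-1) * e1 * (1 - c * c * d)); first by ring.
  by rewrite hcd subrr mulr0.
right; right; exists k; split => //.
exists B; split; last by exists 1; split; [exact: oner_neq0 | rewrite scale1r ak].
case: (eqVneq e1 0) => [e10|e1n].
  right; split; split => //; try exact: inQB.
    by rewrite evB // -/e1 e10 mulr0.
  by rewrite evB // -/e2 he2' e10 mulr0 oppr0 mulr0.
left; exists B; split; first exact: inQB.
have f1 : evM (f k.-1) B != 0.
  by rewrite evB // -/e1 mulf_neq0 // expf_neq0.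
have f2 : evM (f k) B = - evM (f k.-1) B by apply/eqP; rewrite -addr_eq0 addrC hsum0.
split => //; split; first by rewrite f2 oppr_eq0.
exists 1; split.
  by rewrite expr1n f2 invrN mulrN opprK divff.
by exists 1; split; [exact: oner_neq0 | rewrite scale1r /rC; symmetry; apply: scale1r].
Qed.
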